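(* Let $P=\{\mathbf{x}^{(\mathrm{p})}_i\}_{i=1}^{n_{\mathrm p}}$ and $U=\{\mathbf{x}^{(\mathrm{u})}_i\}_{i=1}^{n_{\mathrm u}}$ be finite sets of points in $\mathbb{R}^d$ (positive and unlabeled examples), let $\pi\in(0,1)$, $w_{\mathrm p}=\pi/n_{\mathrm p}$ and $w_{\mathrm u}=1/n_{\mathrm u}$. Let $P'\subseteq P$ and $U'\subseteq U$, not both empty. For a loss $\ell:\mathbb{R}\times\{-1,+1\}\to\mathbb{R}$ define $$\hat R_{\mathrm{uPU}}(v;P',U')=\sum_{\mathbf{x}\in P'}w_{\mathrm p}\,\ell(v,+1)-\sum_{\mathbf{x}\in P'}w_{\mathrm p}\,\ell(v,-1)+\sum_{\mathbf{x}\in U'}w_{\mathrm u}\,\ell(v,-1),$$ and $\hat R^*_{\mathrm{uPU}}(P',U')=\inf_{v\in\mathbb{R}}\hat R_{\mathrm{uPU}}(v;P',U')\in[-\infty,\infty)$. Let $W_{\mathrm p}=|P'|w_{\mathrm p}$, $W_{\mathrm n}=|U'|w_{\mathrm u}-|P'|w_{\mathrm p}$, and $v^*=\frac{W_{\mathrm p}}{W_{\mathrm p}+W_{\mathrm n}}$, where $v^*=+\infty$ if $W_{\mathrm p}+W_{\mathrm n}=0$. (a) For the quadratic loss $\ell(v,y)=(1-vy)^2$: $$\hat R^*_{\mathrm{uPU}}(P',U')=\begin{cases}-\infty,& v^*=+\infty,\\ 4(W_{\mathrm p}+W_{\mathrm n})\,v^*(1-v^* ),&\text{otherwise.}\end{cases}$$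 (b) For the logistic loss $\ell(v,y)=\ln(1+\exp(-vy))$: $$\hat R^*_{\mathrm{uPU}}(P',U')=\begin{cases}(W_{\mathrm p}+W_{\mathrm n})\bigl(-v^*\ln v^*-(1-v^* )\ln(1-v^* )\bigr),& 0<v^*<1,\\ 0,& v^*\in\{0,1\},\\ -\infty,& v^*>1.\end{cases}$$
   Context: This is the unbiased PU (uPU) risk estimate restricted to a node of a decision tree containing positive examples $P'$ and unlabeled examples $U'$, when a constant score $v$ is predicted at that node. *)

(* Defs.v *)
From HB Require Import structures.
From mathcomp Require Import all_boot all_order all_algebra.
From mathcomp Require Import all_classical all_reals all_analysis.
Set Implicit Arguments. Unset Strict Implicit. Unset Printing Implicit Defensive.
Import Order.TTheory GRing.Theory Num.Theory.
Local Open Scope ring_scope.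

(* uPU risk at a node with positives P' (indices into P) and unlabeled U'
   (indices into U), constant score v, loss ell : R -> R -> R (label +1/-1 as reals). *)
Definition uPU_risk (R : realType) (np nu : nat) (pi : R)
  (ell : R -> R -> R) (P' : {set 'I_np}) (U' : {set 'I_nu}) (v : R) : R :=
  let wp := pi / np%:R in let wu := 1 / nu%:R in
  \sum_(i in P') wp * ell v 1 - \sum_(i in P') wp * ell v (-1)
  + \sum_(j in U') wu * ell v (-1).

Definition uPU_inf (R : realType) (np nu : nat) (pi : R)
  (ell : R -> R -> R) (P' : {set 'I_np}) (U' : {set 'I_nu}) : \bar R :=
  ereal_inf [set (uPU_risk pi ell P' U' v)%:E | v in [set: R]].

Definition Wp (R : realType) (np nu : nat) (pi : R)
  (P' : {set 'I_np}) (U' : {set 'I_nu}) : R := #|P'|%:R * (pi / np%:R).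
Definition Wn (R : realType) (np nu : nat) (pi : R)
  (P' : {set 'I_np}) (U' : {set 'I_nu}) : R :=
  #|U'|%:R * (1 / nu%:R) - #|P'|%:R * (pi / np%:R).

Definition vstar (R : realType) (np nu : nat) (pi : R)
  (P' : {set 'I_np}) (U' : {set 'I_nu}) : \bar R :=
  let s := Wp pi P' U' + Wn pi P' U' in
  if s == 0 then +oo%E else (Wp pi P' U' / s)%:E.

Definition sq_loss (R : realType) (v y : R) : R := (1 - v * y) ^+ 2.
Definition logistic_loss (R : realType) (v y : R) : R := ln (1 + expR (- (v * y))).

(* Main.v *)
Require Import Defs.
From HB Require Import structures.
From mathcomp Require Import all_boot all_order all_algebra.
From mathcomp Require Import all_classical all_reals all_analysis.
From mathcomp Require Import ring lra.
Import Order.TTheory GRing.Theory Num.Theory.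
Local Open Scope ring_scope.

Section Aux.
Variable R : realType.

Lemma inf_att (f : R -> R) x : (forall v, x <= f v) -> (exists v, f v = x) ->
  ereal_inf [set (f v)%:E | v in [set: R]] = x%:E.
Proof.
move=> lb [v fv]; apply/eqP; rewrite eq_le; apply/andP; split.
  by apply: ge_ereal_inf; exists (f v)%:E; [by exists v | rewrite fv].
by apply: le_ereal_inf_tmp => _ [w _ <-]; rewrite lee_fin.
Qed.

Lemma inf_0 (f : R -> R) : (forall v, 0 <= f v) ->
  (forall e, 0 < e -> exists v, f v <= e) ->
  ereal_inf [set (f v)%:E | v in [set: R]] = 0%:E.
Proof.
move=> lb ap.
have h0 : (0%:E <= ereal_inf [set (f v)%:E | v in [set: R]])%E.
  by apply: le_ereal_inf_tmp => _ [w _ <-]; rewrite lee_fin.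
have hle : forall e, 0 < e -> (ereal_inf [set (f v)%:E | v in [set: R]] <= e%:E)%E.
  move=> e e0; have [v hv] := ap e e0.
  by apply: ge_ereal_inf; exists (f v)%:E; [by exists v | rewrite lee_fin].
move: h0 hle; case: (ereal_inf _) => [r| |] //.
- rewrite lee_fin => r0 hle.
  have [->//|rgt] : r = 0 \/ 0 < r by move: r0; rewrite le_eqVlt => /orP[/eqP<-|]; auto.
  have := hle (r/2); rewrite lee_fin; have -> : 0 < r / 2 by rewrite divr_gt0.
  by move=> /(_ isT) => h; exfalso; lra.
- by move=> _ /(_ 1 ltr01).
Qed.

Lemma inf_Ny (f : R -> R) : (forall M, exists v, f v <= M) ->
  ereal_inf [set (f v)%:E | v in [set: R]] = -oo%E.
Proof.
move=> ap.
have hle : forall M, (ereal_inf [set (f v)%:E | v in [set: R]] <= M%:E)%E.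
  move=> M; have [v hv] := ap M.
  by apply: ge_ereal_inf; exists (f v)%:E; [by exists v | rewrite lee_fin].
move: hle; case: (ereal_inf _) => [r| |] //.
- move=> h; have := h (r - 1)%R; rewrite (@lee_fin R) => h2; exfalso; lra.
- by move=> h; have := h 0%R.
Qed.

Lemma ln_le_sub1 (y : R) : 0 < y -> ln y <= y - 1.
Proof.
move=> y0; have h : -1 < y - 1 by lra.
by have := le_ln1Dx h; rewrite addrC subrK.
Qed.

Definition L (u : R) := ln (1 + expR u).

Lemma L_ge0 (u : R) : 0 <= L u.
Proof. by apply: ln_ge0; have := expR_gt0 u; lra. Qed.

Lemma L_le (u : R) : L u <= expR u.
Proof. by apply: le_ln1Dx; have := expR_gt0 u; lra. Qed.

Lemma L_ge (u : R) : u <= L u.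
Proof.
rewrite /L -{1}(expRK u) ler_ln ?posrE; have := expR_gt0 u; lra.
Qed.


Lemma logNy (a b : R) : 0 <= a -> b < 0 ->
  forall M, exists v, a * L (- v) + b * L v <= M.
Proof.
move=> a0 b0 M; exists ((`|M| + a) / (- b)).
set v := (`|M| + a) / (- b).
have v0 : 0 <= v by rewrite /v divr_ge0 // ?addr_ge0 //; lra.
have bv : b * v = - (`|M| + a) by rewrite /v; field; lra.
have e1 : expR (- v) <= 1 by rewrite expR_le1; lra.
have h1 : a * L (- v) <= a by have := L_le (- v); nra.
have h2 : b * L v <= b * v by have := L_ge v; nra.
have := ler_norm (- M); rewrite normrN; lra.
Qed.

Lemma gibbs (r v : R) : 0 < r < 1 ->
  - r * ln r - (1 - r) * ln (1 - r) <= r * L (- v) + (1 - r) * L v.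
Proof.
move=> /andP[r0 r1].
set A := 1 + expR (- v); set B := 1 + expR v.
have A0 : 0 < A by rewrite /A; have := expR_gt0 (-v); lra.
have B0 : 0 < B by rewrite /B; have := expR_gt0 v; lra.
have hAB : A^-1 + B^-1 = 1.
  rewrite /A /B expRN; have := expR_gt0 v => e0; field.
  by apply/andP; split; apply/lt0r_neq0; lra.
have rA : 0 < r * A by rewrite mulr_gt0.
have rB : 0 < (1 - r) * B by rewrite mulr_gt0 //; lra.
have iA : 0 < (r * A)^-1 by rewrite invr_gt0.
have iB : 0 < ((1 - r) * B)^-1 by rewrite invr_gt0.
have g1 := ln_le_sub1 _ iA.
have g2 := ln_le_sub1 _ iB.
rewrite lnV ?posrE // lnM ?posrE // in g1.
rewrite lnV ?posrE // lnM ?posrE // ?subr_gt0 // in g2.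
have e1 : r * (r * A)^-1 = A^-1 by rewrite invfM mulrA mulrV ?mul1r // unitfE; lra.
have e2 : (1 - r) * ((1 - r) * B)^-1 = B^-1.
  by rewrite invfM mulrA mulrV ?mul1r // unitfE; lra.
have g1' : r * (- (ln r + ln A)) <= r * ((r * A)^-1 - 1) by rewrite ler_wpM2l //; lra.
have g2' : (1 - r) * (- (ln (1 - r) + ln B)) <= (1 - r) * (((1 - r) * B)^-1 - 1).
  by rewrite ler_wpM2l //; lra.
rewrite /L -/A -/B.
move: g1' g2'; rewrite !mulrBr e1 e2 !mulr1; lra.
Qed.

End Aux.
Arguments L {R}.
Arguments inf_att {R}.
Arguments inf_0 {R}.
Arguments inf_Ny {R}.
Arguments logNy {R}.
Arguments gibbs {R}.
Arguments L_le {R}.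
Arguments L_ge {R}.
Arguments L_ge0 {R}.

Theorem proposition1 (R : realType) (d np nu : nat)
  (xp : 'I_np -> 'rV[R]_d) (xu : 'I_nu -> 'rV[R]_d) (pi : R)
  (hnp : (0 < np)%N) (hnu : (0 < nu)%N) (hpi0 : 0 < pi) (hpi1 : pi < 1)
  (P' : {set 'I_np}) (U' : {set 'I_nu})
  (hne : P' != finset.set0 \/ U' != finset.set0) :
  let W := Wp pi P' U' + Wn pi P' U' in
  let vs := vstar pi P' U' in
  (* (a) quadratic loss *)
  ((vs = +oo%E -> uPU_inf pi (@sq_loss R) P' U' = -oo%E) /\
   (forall r : R, vs = r%:E ->
      uPU_inf pi (@sq_loss R) P' U' = (4 * W * r * (1 - r))%:E)) /\
  (* (b) logistic loss *)
  ((forall r : R, vs = r%:E -> 0 < r < 1 ->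
      uPU_inf pi (@logistic_loss R) P' U'
      = (W * (- r * ln r - (1 - r) * ln (1 - r)))%:E) /\
   ((vs = 0%:E \/ vs = 1%:E) -> uPU_inf pi (@logistic_loss R) P' U' = 0%:E) /\
   ((1%:E < vs)%E -> uPU_inf pi (@logistic_loss R) P' U' = -oo%E)).
Proof.
move=> W vs.
have risk : forall ell v, uPU_risk pi ell P' U' v
    = Wp pi P' U' * ell v 1 + Wn pi P' U' * ell v (-1).
  move=> ell v; rewrite /uPU_risk /Wp /Wn /= !sumr_const; ring.
have hWe : W = #|U'|%:R * (1 / nu%:R) by rewrite /W /Wp /Wn; ring.
have nu0 : 0 < nu%:R :> R by rewrite ltr0n.
have np0 : 0 < np%:R :> R by rewrite ltr0n.
have a0 : 0 <= Wp pi P' U'.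
  by rewrite /Wp mulr_ge0 // divr_ge0 // ltW.
have W0 : 0 <= W by rewrite hWe mulr_ge0 // divr_ge0.
have Wz : W = 0 -> 0 < Wp pi P' U'.
  move=> /eqP; rewrite hWe mulf_eq0 div1r invr_eq0 (gt_eqF nu0) orbF pnatr_eq0.
  move=> /eqP /cards0_eq U0; case: hne => [hP|]; last by rewrite U0 eqxx.
  by rewrite /Wp mulr_gt0 ?divr_gt0 // ltr0n card_gt0.
have sq1 : forall v : R, sq_loss v 1 = (1 - v) ^+ 2 by move=> v; rewrite /sq_loss mulr1.
have sq2 : forall v : R, sq_loss v (-1) = (1 + v) ^+ 2 by move=> v; rewrite /sq_loss mulrN1 opprK.
have lg1 : forall v : R, logistic_loss v 1 = L (- v) by move=> v; rewrite /logistic_loss /L mulr1.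
have lg2 : forall v : R, logistic_loss v (-1) = L v by move=> v; rewrite /logistic_loss /L mulrN1 opprK.
have vsE : vs = if W == 0 then +oo%E else (Wp pi P' U' / W)%:E by [].
have hW : W = Wp pi P' U' + Wn pi P' U' by [].
rewrite /uPU_inf.
clearbody W vs.
move: (Wp pi P' U') (Wn pi P' U') risk a0 Wz vsE hW => a b risk a0 Wz vsE hW.
have [Wz0|WnZ] := eqVneq W 0.
  rewrite vsE Wz0 eqxx; have apos := Wz Wz0.
  have hb : b = - a by lra.
  have bneg : b < 0 by lra.
  split; [split|split; [|split]].
  - move=> _; apply: inf_Ny => M; exists ((1 - M) / (4 * a)).
    rewrite risk sq1 sq2 hb.
    have -> : a * (1 - (1 - M) / (4 * a)) ^+ 2 + - a * (1 + (1 - M) / (4 * a)) ^+ 2 = M - 1.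
      by field; apply: lt0r_neq0.
    by rewrite lerBlDr lerDl ler01.
  - by move=> r h; discriminate h.
  - by move=> r h; discriminate h.
  - by case=> h; discriminate h.
  - move=> _; apply: inf_Ny => M; have [v hv] := logNy _ _ a0 bneg M.
    by exists v; rewrite risk lg1 lg2.
have Wpos : 0 < W by rewrite lt0r WnZ.
rewrite vsE (negbTE WnZ).
set r0 := a / W.
have ha : a = W * r0 by rewrite /r0; field.
have hb : b = W - W * r0 by lra.
split; [split|split; [|split]].
- by move=> h; discriminate h.
- move=> r [<-]; apply: inf_att.
    move=> v; rewrite risk sq1 sq2 ha hb -subr_ge0.
    have -> : W * r0 * (1 - v) ^+ 2 + (W - W * r0) * (1 + v) ^+ 2 - 4 * W * r0 * (1 - r0)
      = W * (v + 1 - 2 * r0) ^+ 2 by ring.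
    by rewrite mulr_ge0 // sqr_ge0.
  by exists (2 * r0 - 1); rewrite risk sq1 sq2 ha hb; ring.
- move=> r [<-] hr; apply: inf_att.
    move=> v; rewrite risk lg1 lg2 ha hb.
    have -> : W * r0 * L (- v) + (W - W * r0) * L v = W * (r0 * L (- v) + (1 - r0) * L v) by ring.
    by rewrite ler_wpM2l // gibbs.
  case/andP: hr => r00 r01.
  have q0 : 0 < r0 / (1 - r0) by rewrite divr_gt0 // subr_gt0.
  exists (ln (r0 / (1 - r0))); rewrite risk lg1 lg2 /L expRN lnK ?posrE //.
  have -> : 1 + (r0 / (1 - r0))^-1 = r0^-1.
    field; apply/andP; split; apply: lt0r_neq0; lra.
  have -> : 1 + r0 / (1 - r0) = (1 - r0)^-1.
    field; apply: lt0r_neq0; lra.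
  rewrite !lnV ?posrE ?subr_gt0 // ha hb; ring.
- case=> -[h].
  + apply: inf_0.
      move=> v; rewrite risk lg1 lg2 ha hb h mulr0 mul0r add0r subr0.
      by rewrite mulr_ge0 // L_ge0.
    move=> e e0; exists (ln (e / W)); rewrite risk lg1 lg2 ha hb h mulr0 mul0r add0r subr0.
    have := L_le (ln (e / W)); rewrite lnK ?posrE ?divr_gt0 // => h1.
    have : W * L (ln (e / W)) <= W * (e / W) by rewrite ler_wpM2l.
    suff -> : W * (e / W) = e by [].
    by field; apply: lt0r_neq0.
  + apply: inf_0.
      move=> v; rewrite risk lg1 lg2 ha hb h mulr1 subrr mul0r addr0.
      by rewrite mulr_ge0 // L_ge0.
    move=> e e0; exists (- ln (e / W)); rewrite risk lg1 lg2 ha hb h mulr1 subrr mul0r addr0 opprK.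
    have := L_le (ln (e / W)); rewrite lnK ?posrE ?divr_gt0 // => h1.
    have : W * L (ln (e / W)) <= W * (e / W) by rewrite ler_wpM2l.
    suff -> : W * (e / W) = e by [].
    by field; apply: lt0r_neq0.
- rewrite lte_fin => h.
  have bneg : b < 0 by rewrite hb; nra.
  apply: inf_Ny => M; have [v hv] := logNy _ _ a0 bneg M.
  by exists v; rewrite risk lg1 lg2.
Qed.
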